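(* Let $C$ be a finite order SISO deterministic program with uniformly distributed secret input. Let $S=\{N\in\mathbb{N}^+ : |\mathcal{O}_N|\ge 2\}$, and assume $S\neq\emptyset$. Then for every $\alpha\in(0,\infty]$, $$0<\inf_{N\in S}\frac{IL_\alpha(C,N)}{T_\alpha(\mathbf{p}_N)}\le\sup_{N\in S}\frac{IL_\alpha(C,N)}{T_\alpha(\mathbf{p}_N)}<\infty.$$
   Context: A SISO deterministic program $C$ is a family indexed by $N\in\mathbb{N}^+$: for each $N$, a random variable $A$ uniformly distributed on $\mathcal{A}_N=\{0,1,\dots,N-1\}$, and a surjective map $F_N$ from $\mathcal{A}_N$ onto a finite set $\mathcal{O}_N$. The output is $O=F_N(A)$, and $\mathbf{p}_N$ denotes its distribution vector, so $\mathbf{p}_N(o)=|F_N^{-1}(o)|/N$. $C$ is of finite order (an FOP) if $\sup_N\|\mathbf{p}_N\|_0<\infty$, where $\|\mathbf{p}\|_0$ is the number of nonzero entries of $\mathbf{p}$; equivalently, $\sup_N|\mathcal{O}_N|<\infty$. For a probability vector $\mathbf{p}=(p_1,\dots,p_n)$ and $\alpha\in(0,\infty]$, the Rényi entropy is $H_\alpha(\mathbf{p})=\frac{1}{1-\alpha}\log\sum_i p_i^\alpha$ for $\alpha\notin\{1,\infty\}$. The limiting cases are $H_1(\mathbf{p})=-\sum_i p_i\log p_i$ and $H_\infty(\mathbf{p})=-\log\max_i p_i$. The $\alpha$-information leakage is $IL_\alpha(C,N)=H_\alpha(\mathbf{p}_N)$. With $p_1=\|\mathbf{p}\|_\infty=\max_i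 p_i$, define $$T_\alpha(\mathbf{p})=\begin{cases}1-p_1 & \text{if } \alpha>1 \text{ (including } \alpha=\infty),\\ -(1-p_1)\log(1-p_1) & \text{if } \alpha=1,\\ (1-p_1)^\alpha & \text{if } 0<\alpha<1.\end{cases}$$ *)

(* Defs.v *)
From HB Require Import structures.
From mathcomp Require Import all_boot all_order all_algebra.
From mathcomp Require Import all_classical all_reals.
From mathcomp Require Import ereal exp.
Set Implicit Arguments. Unset Strict Implicit. Unset Printing Implicit Defensive.
Import Order.TTheory GRing.Theory Num.Theory.
Local Open Scope ring_scope.

Section Defs.
Variable R : realType.

(* distribution vector p_N of the output O = F_N(A), A uniform on 'I_N *)
Definition outdist (N : nat) (O : finType) (F : 'I_N -> O) (o : O) : R :=
  (#|[set a : 'I_N | F a == o]|)%:R / N%:R.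

(* ||p||_infty = max_i p_i  (p is nonnegative) *)
Definition pmax (T : finType) (p : T -> R) : R := \big[Num.max/0]_(t : T) p t.

(* Renyi entropy H_alpha, alpha in (0, +oo] given as an extended real *)
Definition renyi (T : finType) (p : T -> R) (alpha : \bar R) : R :=
  match alpha with
  | +oo%E => - ln (pmax p)
  | (a%:E)%E => if a == 1 then - \sum_(t : T) p t * ln (p t)
                else (1 - a)^-1 * ln (\sum_(t : T) p t `^ a)
  | -oo%E => 0 (* not used: alpha > 0 *)
  end.

Definition Talpha (T : finType) (p : T -> R) (alpha : \bar R) : R :=
  let p1 := pmax p in
  match alpha with
  | +oo%E => 1 - p1
  | (a%:E)%E => if 1 < a then 1 - p1
                else if a == 1 then - ((1 - p1) * ln (1 - p1))
                else (1 - p1) `^ a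
  | -oo%E => 0
  end.

Definition leakage (O : nat -> finType) (F : forall N, 'I_N -> O N)
  (alpha : \bar R) (N : nat) : R := renyi (outdist (F N)) alpha.

End Defs.

(* Main.v *)
Require Import Defs.
From HB Require Import structures.
From mathcomp Require Import all_boot all_order all_algebra.
From mathcomp Require Import all_classical all_reals.
From mathcomp Require Import ereal exp.
From mathcomp Require Import ring lra.
Import Order.TTheory GRing.Theory Num.Theory.
Local Open Scope ring_scope.
Set Implicit Arguments. Unset Strict Implicit.

Section Basic.
Variable R : realType.
Lemma ln_le_sub1 (x : R) : 0 < x -> ln x <= x - 1.
Proof. move=> x0; have := @le_ln1Dx R (x - 1). have -> : 1 + (x - 1) = x by ring. apply; lra. Qed.
Lemma ln_ge_1inv (x : R) : 0 < x -> 1 - x^-1 <= ln x.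
Proof.
move=> x0; have := @ln_le_sub1 x^-1; rewrite invr_gt0 => /(_ x0).
rewrite lnV ?posrE //; lra.
Qed.
Lemma powR1r (x : R) : 1 `^ x = 1. Proof. by rewrite powR1. Qed.
Lemma powR_mono (x y r : R) : 0 <= r -> 0 <= x -> x <= y -> x `^ r <= y `^ r.
Proof. move=> r0 x0 xy; apply: ge0_ler_powR => //; rewrite nnegrE //; exact: le_trans xy. Qed.
End Basic.

Section Core.
Variables (R : realType) (T : finType) (p : T -> R) (K : nat) (t0 : T).
Hypotheses (p_gt0 : forall t, 0 < p t) (psum : \sum_t p t = 1)
  (ple : forall t, p t <= p t0) (cardK : (#|T| <= K)%N) (card2 : (2 <= #|T|)%N).
Let q := 1 - p t0.
Lemma sumq : \sum_(t | t != t0) p t = q.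
Proof.
have := psum; rewrite (bigD1 t0) //= /q => <-.
by rewrite addrC addrK.
Qed.
Lemma pt_le_q t : t != t0 -> p t <= q.
Proof.
move=> tn; rewrite -sumq (bigD1 t) //=; rewrite lerDl; apply: sumr_ge0 => i _; exact: ltW.
Qed.
Lemma q_gt0 : 0 < q.
Proof.
have : exists t1, t1 != t0.
  have /card_gt1P [x [y [_ _ xy]]] := card2.
  case: (eqVneq x t0) => [xt|xn]; last by exists x.
  by exists y; rewrite -xt eq_sym.
by case=> t1 /pt_le_q; apply: lt_le_trans.
Qed.
Lemma K_ge2 : (2 <= K)%N. Proof. exact: leq_trans card2 cardK. Qed.
Lemma p0_ge : (K%:R)^-1 <= p t0.
Proof.
have K0 : 0 < K%:R :> R by rewrite ltr0n (leq_trans _ K_ge2).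
rewrite -[_^-1]div1r ler_pdivrMr //.
rewrite -[X in X <= _]psum.
apply: (le_trans (ler_sum _ (fun i _ => ple i))) => /=.
rewrite sumr_const mulr_natr; apply: ler_wpMn2l; [exact: ltW (p_gt0 t0)|].
by [] || exact: cardK.
Qed.
Lemma q_le : q <= 1 - (K%:R)^-1. Proof. have := p0_ge; rewrite /q; lra. Qed.
Lemma p0_gt0 : 0 < p t0. Proof. exact: p_gt0. Qed.
Lemma p0_le1 : p t0 <= 1. Proof. have := q_gt0; rewrite /q; lra. Qed.
End Core.

Section Cases.
Variables (R : realType) (T : finType) (p : T -> R) (K : nat) (t0 : T).
Hypotheses (p_gt0 : forall t, 0 < p t) (psum : \sum_t p t = 1)
  (ple : forall t, p t <= p t0) (cardK : (#|T| <= K)%N) (card2 : (2 <= #|T|)%N).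
Let q := 1 - p t0.
Let hq0 : 0 < q. Proof. exact: q_gt0 p_gt0 psum card2. Qed.
Let hqle : q <= 1 - K%:R^-1. Proof. exact: q_le p_gt0 psum ple cardK card2. Qed.
Let hp0 : 0 < p t0 := p_gt0 t0.
Let hp1 : p t0 <= 1. Proof. exact: p0_le1 p_gt0 psum card2. Qed.
Let hK : 0 < K%:R :> R.
Proof. by rewrite ltr0n (leq_trans _ (K_ge2 cardK card2)). Qed.
Let hpK : K%:R^-1 <= p t0. Proof. exact: p0_ge p_gt0 psum ple cardK card2. Qed.
Let hptq t : t != t0 -> p t <= q. Proof. by move=> h; rewrite /q; apply: (pt_le_q p_gt0 psum h). Qed.
Let hsumq : \sum_(t | t != t0) p t = q. Proof. exact: sumq psum. Qed.

Lemma q_lt1 : q < 1. Proof. have := hp0; rewrite /q; lra. Qed.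

Lemma inf_lo : q <= - ln (p t0).
Proof. have := ln_le_sub1 hp0; rewrite /q; lra. Qed.

Lemma inf_hi : - ln (p t0) <= K%:R * q.
Proof.
have /ln_le_sub1 : 0 < (p t0)^-1 by rewrite invr_gt0.
rewrite lnV ?posrE // => h.
have h2 : (p t0)^-1 <= K%:R.
  by rewrite -(invrK (K%:R)) lef_pV2 ?posrE ?invr_gt0.
have e : (p t0)^-1 - 1 = (p t0)^-1 * q by rewrite /q mulrBr mulr1 mulVf ?gt_eqF.
apply: (le_trans h); rewrite e ler_wpM2r //; exact: ltW.
Qed.
Lemma sum_pow_ge0 a : 0 < a -> p t0 `^ a <= \sum_t p t `^ a.
Proof.
move=> a0; rewrite (bigD1 t0) //= lerDl; apply: sumr_ge0 => i _; exact: powR_ge0.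
Qed.

Lemma gt1_lo a : 1 < a -> q <= (1 - a)^-1 * ln (\sum_t p t `^ a).
Proof.
move=> a1.
have hS : \sum_t p t `^ a <= p t0 `^ (a - 1).
  have -> : p t0 `^ (a - 1) = \sum_t p t * p t0 `^ (a - 1).
    by rewrite -mulr_suml psum mul1r.
  apply: ler_sum => t _; rewrite -(mulr_powRB1 (ltW (p_gt0 t))) ?(lt_trans ltr01) //.
  rewrite ler_wpM2l ?(ltW (p_gt0 t)) //; apply: ge0_ler_powR => //.
  - by rewrite subr_ge0 ltW.
  - by rewrite nnegrE ltW.
  - by rewrite nnegrE ltW.
have Spos : 0 < \sum_t p t `^ a.
  apply: lt_le_trans (sum_pow_ge0 (lt_trans ltr01 a1)); exact: powR_gt0.
have hl : ln (\sum_t p t `^ a) <= (a - 1) * ln (p t0).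
  rewrite -ln_powR ler_ln ?posrE //; exact: powR_gt0.
have e : (1 - a)^-1 * ln (\sum_t p t `^ a) = (a - 1)^-1 * (- ln (\sum_t p t `^ a)).
  by rewrite -[1 - a]opprB invrN mulNr mulrN.
rewrite e; apply: (le_trans inf_lo).
rewrite ler_pdivlMl ?subr_gt0 //; lra.
Qed.

Lemma gt1_hi a : 1 < a ->
  (1 - a)^-1 * ln (\sum_t p t `^ a) <= ((a - 1)^-1 * a * K%:R) * q.
Proof.
move=> a1; have a0 : 0 < a by apply: lt_trans a1.
have hS := sum_pow_ge0 a0.
have hl : a * ln (p t0) <= ln (\sum_t p t `^ a).
  rewrite -ln_powR ler_ln ?posrE //; [exact: powR_gt0|].
  apply: lt_le_trans hS; exact: powR_gt0.
have e : (1 - a)^-1 * ln (\sum_t p t `^ a) = (a - 1)^-1 * (- ln (\sum_t p t `^ a)).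
  by rewrite -[1 - a]opprB invrN mulNr mulrN.
rewrite e -!mulrA; apply: ler_wpM2l; first by rewrite invr_ge0 subr_ge0 ltW.
have h := inf_hi.
have h2 : - ln (\sum_t p t `^ a) <= a * - ln (p t0) by rewrite mulrN; lra.
apply: (le_trans h2); apply: ler_wpM2l => //; exact: ltW.
Qed.
Lemma lnq_lt0 : ln q < 0.
Proof. apply: ln_lt0; rewrite hq0 /=; exact: q_lt1. Qed.

Lemma T1_gt0 : 0 < - (q * ln q).
Proof. rewrite oppr_gt0 pmulr_rlt0 //; exact: lnq_lt0. Qed.

Lemma eq1_lo : - (q * ln q) <= - \sum_t p t * ln (p t).
Proof.
rewrite (bigD1 t0) //= opprD.
have h0 : 0 <= - (p t0 * ln (p t0)).
  by rewrite oppr_ge0 pmulr_rle0 // ln_le0.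
have h1 : - (q * ln q) <= - \sum_(t | t != t0) p t * ln (p t).
  have -> : q * ln q = \sum_(t | t != t0) p t * ln q by rewrite -mulr_suml hsumq.
  rewrite -!sumrN; apply: ler_sum => t tn.
  rewrite lerN2; apply: ler_wpM2l; first exact: ltW (p_gt0 t).
  rewrite ler_ln ?posrE //; exact: hptq.
lra.
Qed.

Lemma eq1_hi : - \sum_t p t * ln (p t) <= (1 + (K.+1)%:R * K%:R) * - (q * ln q).
Proof.
rewrite (bigD1 t0) //= opprD.
have h0 : - (p t0 * ln (p t0)) <= q.
  have := inf_lo; have := inf_hi => _ _.
  have /ln_le_sub1 : 0 < (p t0)^-1 by rewrite invr_gt0.
  rewrite lnV ?posrE // => h.
  have : - ln (p t0) * p t0 <= ((p t0)^-1 - 1) * p t0 by rewrite ler_wpM2r // ltW.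
  rewrite mulrBl mulVf ?gt_eqF // mul1r /q; lra.
have h1 : - \sum_(t | t != t0) p t * ln (p t) <= - (q * ln q) + K%:R * q.
  have hc : \sum_(t | t != t0) q <= K%:R * q.
    rewrite sumr_const -[X in X <= _]mulr_natl; apply: ler_wpM2r; first exact: ltW.
    rewrite ler_nat; apply: leq_trans cardK; exact: max_card.
  have -> : q * ln q = \sum_(t | t != t0) p t * ln q by rewrite -mulr_suml hsumq.
  apply: le_trans (_ : _ <= \sum_(t | t != t0) (- (p t * ln q) + q)) _.
    rewrite -sumrN; apply: ler_sum => t tn.
    have pt := p_gt0 t.
    have /ln_le_sub1 : 0 < q / p t by rewrite divr_gt0.
    rewrite ln_div ?posrE // => h.
    have : p t * (ln q - ln (p t)) <= p t * (q / p t - 1) by rewrite ler_wpM2l // ltW.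
    rewrite mulrBr mulrBr mulrCA mulfV ?gt_eqF // mulr1 mulr1.
    have := hptq tn; lra.
  rewrite big_split /= sumrN; lra.
have hq : q <= K%:R * - (q * ln q).
  have h2 : K%:R^-1 <= - ln q by have := ln_le_sub1 hq0; have := hqle; lra.
  have : K%:R * K%:R^-1 <= K%:R * - ln q by rewrite ler_wpM2l // ltW.
  rewrite mulfV ?gt_eqF // => h3.
  have : q * 1 <= q * (K%:R * - ln q) by rewrite ler_wpM2l // ltW.
  rewrite mulr1 => h4; apply: (le_trans h4); rewrite mulrN mulrN mulrCA; lra.
have : K%:R * q <= K%:R * (K%:R * - (q * ln q)) by rewrite ler_wpM2l // ltW.
move=> h5.
have -> : (1 + (K.+1)%:R * K%:R) * - (q * ln q) =
   - (q * ln q) + K%:R * - (q * ln q) + K%:R * (K%:R * - (q * ln q)).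
  by rewrite -natr1; ring.
have := h0; have := h1; have := hq; lra.
Qed.
Lemma lt1_hi a : 0 < a -> a < 1 ->
  (1 - a)^-1 * ln (\sum_t p t `^ a) <= ((1 - a)^-1 * K%:R) * q `^ a.
Proof.
move=> a0 a1.
have Spos : 0 < \sum_t p t `^ a.
  apply: lt_le_trans (sum_pow_ge0 a0); exact: powR_gt0.
have hS : \sum_t p t `^ a <= 1 + K%:R * q `^ a.
  rewrite (bigD1 t0) //=; apply: lerD.
    rewrite -[X in _ <= X](powR1r a); apply: powR_mono; [exact: ltW a0|exact: ltW hp0|exact: hp1].
  apply: (@le_trans _ _ (\sum_(t | t != t0) q `^ a)).
    apply: ler_sum => t tn; apply: powR_mono; [exact: ltW a0|exact: ltW (p_gt0 t)|exact: hptq].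
  rewrite sumr_const -[X in X <= _]mulr_natl; apply: ler_wpM2r; first exact: powR_ge0.
  rewrite ler_nat; apply: leq_trans cardK; exact: max_card.
have hl := ln_le_sub1 Spos.
rewrite -mulrA; apply: ler_wpM2l; first by rewrite invr_ge0 subr_ge0 ltW.
lra.
Qed.

Lemma lt1_lo a : 0 < a -> a < 1 ->
  ((1 - a)^-1 * (1 - (1 - K%:R^-1) `^ (1 - a)) / 2) * q `^ a
    <= (1 - a)^-1 * ln (\sum_t p t `^ a).
Proof.
move=> a0 a1.
have hA : p t0 <= p t0 `^ a by apply: ger1_powR; rewrite ?hp0 ?hp1 ?ltW.
have hB : q `^ a <= \sum_(t | t != t0) p t `^ a.
  rewrite -(mulr_powRB1 (ltW hq0) a0) -[X in X * _]hsumq mulr_suml.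
  apply: ler_sum => t tn; have pt := p_gt0 t.
  rewrite -(mulr_powRB1 (ltW pt) a0); apply: ler_wpM2l; first exact: ltW.
  have -> : a - 1 = - (1 - a) by rewrite opprB.
  rewrite !powRN lef_pV2 ?posrE ?powR_gt0 //.
  apply: powR_mono; [by rewrite subr_ge0 ltW|exact: ltW pt|exact: hptq].
have hS : 1 - q + q `^ a <= \sum_t p t `^ a.
  rewrite (bigD1 t0) //= /q; have := hA; have := hB; rewrite /q; lra.
have hqa1 : q `^ a <= 1.
  rewrite -[X in _ <= X](powR1r a); apply: powR_mono; [exact: ltW a0|exact: ltW hq0|exact: ltW q_lt1].
have hsplit : q = q `^ a * q `^ (1 - a).
  rewrite -powRD; first by rewrite addrC subrK powRr1 // ltW.
  by rewrite addrC subrK oner_eq0.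
have hd : q `^ (1 - a) <= (1 - K%:R^-1) `^ (1 - a).
  apply: powR_mono; [by rewrite subr_ge0 ltW|exact: ltW hq0|].
  by have := hqle; have := hq0; lra.
set d := (1 - K%:R^-1) `^ (1 - a) in hd *.
set y := q `^ a - q.
have hqa0 : 0 <= q `^ a := powR_ge0 _ _.
have hy : q `^ a * (1 - d) <= y.
  rewrite /y [X in _ <= _ - X]hsplit; have : q `^ a * q `^ (1 - a) <= q `^ a * d by rewrite ler_wpM2l.
  rewrite mulrBr mulr1; lra.
have hd1 : d <= 1.
  rewrite /d -[X in _ <= X](powR1r (1 - a)); apply: powR_mono; [by rewrite subr_ge0 ltW| |].
    by rewrite subr_ge0 invf_le1 // ler1n (leq_trans _ (K_ge2 cardK card2)).
  by rewrite gerBl invr_ge0 ltW.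
have y0 : 0 <= y.
  apply: le_trans hy; apply: mulr_ge0 => //; lra.
have y1 : y <= 1 by rewrite /y; have := hq0; lra.
have hS' : 1 + y <= \sum_t p t `^ a by rewrite /y; lra.
have hy1 : 0 < 1 + y by lra.
have hl1 : ln (1 + y) <= ln (\sum_t p t `^ a).
  by rewrite ler_ln ?posrE //; apply: lt_le_trans hS'.
have hl2 := ln_ge_1inv hy1.
have hinv : (1 + y)^-1 <= 1 - y / 2.
  have e : (1 + y)^-1 = (1 + y)^-1 * 1 by rewrite mulr1.
  have h3 : 1 <= (1 + y) * (1 - y / 2) by nra.
  rewrite e; apply: (@le_trans _ _ ((1 + y)^-1 * ((1 + y) * (1 - y / 2)))).
    by apply: ler_wpM2l; rewrite ?invr_ge0 //; lra.
  by rewrite mulrA mulVf ?mul1r //; apply: lt0r_neq0; lra.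
have hl3 : y / 2 <= ln (\sum_t p t `^ a).
  lra.
have -> : (1 - a)^-1 * (1 - d) / 2 * q `^ a = (1 - a)^-1 * (q `^ a * (1 - d) / 2).
  by ring.
apply: ler_wpM2l; first by rewrite invr_ge0 subr_ge0 ltW.
lra.
Qed.
End Cases.

Lemma bounds (R : realType) (alpha : \bar R) (halpha : (0 < alpha)%E) (K : nat)
  (K2 : (2 <= K)%N) :
  exists lo hi : R, 0 < lo /\ forall (T : finType) (p : T -> R) (t0 : T),
   (forall t, 0 < p t) -> \sum_t p t = 1 -> (forall t, p t <= p t0) ->
   (#|T| <= K)%N -> (2 <= #|T|)%N -> pmax p = p t0 ->
   0 < Talpha p alpha /\ lo * Talpha p alpha <= renyi p alpha /\
   renyi p alpha <= hi * Talpha p alpha.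
Proof.
case: alpha halpha => [a||] //; rewrite ?lte_fin => a0.
- case: (ltrgtP a 1) => [a1|a1|a1].
  + exists ((1 - a)^-1 * (1 - (1 - K%:R^-1) `^ (1 - a)) / 2).
    exists ((1 - a)^-1 * K%:R); split.
      have hK : 0 < K%:R :> R by rewrite ltr0n (leq_trans _ K2).
      have hd : (1 - K%:R^-1) `^ (1 - a) < 1.
        rewrite -[X in _ < X](powR1r (1 - a)); apply: gt0_ltr_powR.
        - by rewrite subr_gt0.
        - by rewrite nnegrE subr_ge0 invf_le1 // ler1n (leq_trans _ K2).
        - by rewrite nnegrE.
        - by rewrite gtrBl invr_gt0.
      apply: divr_gt0 => //; apply: mulr_gt0; first by rewrite invr_gt0 subr_gt0.
      by rewrite subr_gt0.
    move=> T p t0 p_gt0 psum ple cardK card2 pm.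
    rewrite /Talpha /renyi pm (ltNge 1 a) (ltW a1) /= (lt_eqF a1).
    split; first by apply: powR_gt0; exact: q_gt0 p_gt0 psum card2.
    split; [exact: lt1_lo | exact: lt1_hi].
  + exists 1, ((a - 1)^-1 * a * K%:R); split => //.
    move=> T p t0 p_gt0 psum ple cardK card2 pm.
    rewrite /Talpha /renyi pm a1 (gt_eqF a1) mul1r.
    split; first exact: q_gt0 p_gt0 psum card2.
    split; [exact: gt1_lo | exact: gt1_hi].
  + subst a; exists 1, (1 + (K.+1)%:R * K%:R); split => //.
    move=> T p t0 p_gt0 psum ple cardK card2 pm.
    rewrite /Talpha /renyi pm ltxx eqxx mul1r.
    split; first exact: T1_gt0.
    split; [exact: eq1_lo | exact: eq1_hi].
- exists 1, K%:R; split => //.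
  move=> T p t0 p_gt0 psum ple cardK card2 pm.
  rewrite /Talpha /renyi pm mul1r.
  split; first exact: q_gt0 p_gt0 psum card2.
  split; [exact: inf_lo | exact: inf_hi].
Qed.

Lemma outdist_props (R : realType) (N : nat) (O : finType) (F : 'I_N -> O)
  (N0 : (0 < N)%N) (surj : forall o, exists a, F a = o) :
  (forall o, 0 < @outdist R N O F o) /\ \sum_o @outdist R N O F o = 1.
Proof.
have hN : 0 < N%:R :> R by rewrite ltr0n.
split.
  move=> o; rewrite /outdist; apply: divr_gt0 => //; rewrite ltr0n card_gt0.
  case: (surj o) => a <-; apply/set0Pn; exists a; by rewrite inE.
rewrite /outdist -mulr_suml -natr_sum.
have -> : (\sum_(o : O) #|[set a : 'I_N | F a == o]|)%N = N.
  transitivity (\sum_(o : O | xpredT o) \sum_(a : 'I_N | xpredT a && (F a == o)) 1)%N.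
    by apply: eq_bigr => o _; rewrite -sum1_card; apply: eq_bigl => a; rewrite inE.
  by rewrite -(partition_big F xpredT) //= sum1_card card_ord.
by rewrite mulfV ?gt_eqF.
Qed.

Unset Implicit Arguments. Set Strict Implicit.
Local Open Scope classical_set_scope.

Theorem proposition1 (R : realType) (O : nat -> finType)
  (F : forall N : nat, 'I_N -> O N)
  (Fsurj : forall N : nat, (0 < N)%N -> forall o : O N, exists a : 'I_N, F N a = o)
  (FOP : exists K : nat, forall N : nat, (0 < N)%N -> (#|O N| <= K)%N)
  (Sne : exists N : nat, (0 < N)%N /\ (2 <= #|O N|)%N)
  (alpha : \bar R) (halpha : (0 < alpha)%E) :
  let S := [set N : nat | (0 < N)%N /\ (2 <= #|O N|)%N] in
  let ratio := fun N : nat =>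
    @leakage R O F alpha N / Talpha (@outdist R N (O N) (F N)) alpha in
  (0 < ereal_inf [set (ratio N)%:E | N in S])%E /\
  (ereal_inf [set (ratio N)%:E | N in S] <= ereal_sup [set (ratio N)%:E | N in S])%E /\
  (ereal_sup [set (ratio N)%:E | N in S] < +oo)%E.
Proof.
move=> S ratio.
case: FOP => K HK; case: Sne => N1 [N10 N1c].
have K2 : (2 <= K)%N := leq_trans N1c (HK N1 N10).
have [lo [hi [lo0 Hb]]] := bounds halpha K2.
have Hr : forall N, S N -> lo <= ratio N <= hi.
  move=> N [N0 c2].
  have [pg ps] := @outdist_props R N (O N) (F N) N0 (Fsurj N N0).
  have j : O N := F N (Ordinal N0).
  have [t0 _ Et0] := @eq_bigmax _ _ _ 0 j xpredT (@outdist R N (O N) (F N)) isT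
     (fun i _ => ltW (pg i)).
  have ple : forall t, @outdist R N (O N) (F N) t <= @outdist R N (O N) (F N) t0.
    by move=> t; rewrite -Et0; exact: le_bigmax.
  have [T0 [hl hh]] := Hb _ _ t0 pg ps ple (HK N N0) c2 Et0.
  rewrite /ratio /leakage; apply/andP; split.
    by rewrite ler_pdivlMr.
  by rewrite ler_pdivrMr.
have xS : S N1 by split.
split; last split.
- apply: (@lt_le_trans _ _ lo%:E); first by rewrite lte_fin.
  apply/ereal_infP => _ [N SN <-]; rewrite lee_fin; by case/andP: (Hr N SN).
- apply: (@le_trans _ _ (ratio N1)%:E).
    by apply: ereal_inf_lbound; exists N1.
  by apply: ereal_sup_ubound; exists N1.
- apply: (@le_lt_trans _ _ hi%:E); last exact: ltry.
  apply/ereal_supP => _ [N SN <-]; rewrite lee_fin; by case/andP: (Hr N SN).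
Qed.
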